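(* The transition kernel $\hat\pi^{(\epsilon)}(x,dy)$ converges in total variation to $W_1(dy)$ uniformly in $x$: $\sup_{x\in\Omega_1}d_{TV}(\hat\pi^{(\epsilon)}(x,\cdot),W_1)\to0$ as $\epsilon\to0$. Moreover, for any $\gamma\in(0,1)$ there is $\epsilon_0=\epsilon_0(\gamma)$ such that $\hat\pi^{(\epsilon)}(x,A)\ge\gamma W_1(A)$ for all $x\in\Omega_1$, all Borel $A\subseteq\Omega_1$ and all $\epsilon<\epsilon_0$.
   Context: $\phi,\psi$ positive smooth, $\phi$ supported in $[0,1]$, $\psi:\mathbb{R}^2\to\mathbb{R}$ symmetric supported in $\{|x|\le1/2\}$, $R(s,y)=(\phi\star\tilde\phi)(s)(\psi\star\psi)(y)$, $\tilde\phi(s)=\phi(-s)$. Fix $\hat\beta>0$, let $\beta_\epsilon=\hat\beta/\sqrt{\log(1/\epsilon)}$. $\Omega_1=\{\omega\in C([0,1];\mathbb{R}^2):\omega(0)=0\}$, $W_1$ Wiener measure on $\Omega_1$, $\hat{\mathbb{P}}^{(\epsilon)}_1(dx)\propto\exp\big(\frac{\beta_\epsilon^2}{2}\int_{[0,1]^2}R(s-u,x(s)-x(u))dsdu\big)W_1(dx)$ normalized to a probability. $I^{(\epsilon)}(x,y)=\beta_\epsilon^2\int_{[0,1]^2}R(s-u,y(s)+x(1)-x(u))dsdu$ for $x,y\in\Omega_1$. Let $\rho^{(\epsilon)}>0$ be the largest eigenvalue and $\Psi^{(\epsilon)}$ the (unique) associated eigenfunction of $\int_{\Omega_1}e^{I^{(\epsilon)}(x,y)}\Psi(y)\hat{\mathbb{P}}^{(\epsilon)}_1(dy)=\rho\Psi(x)$,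 with $\Psi^{(\epsilon)}$ bounded above and below by positive constants and $\int\Psi^{(\epsilon)}d\hat{\mathbb{P}}^{(\epsilon)}_1=1$. Define $\hat\pi^{(\epsilon)}(x,dy)=\frac{e^{I^{(\epsilon)}(x,y)}\Psi^{(\epsilon)}(y)\hat{\mathbb{P}}^{(\epsilon)}_1(dy)}{\rho^{(\epsilon)}\Psi^{(\epsilon)}(x)}$. *)

(* Defs.v *)
From HB Require Import structures.
From mathcomp Require Import all_boot all_order all_algebra.
From mathcomp Require Import all_classical all_reals all_analysis.
Set Implicit Arguments. Unset Strict Implicit. Unset Printing Implicit Defensive.
Import Order.TTheory GRing.Theory Num.Theory.
Import numFieldNormedType.Exports.
Local Open Scope classical_set_scope.
Local Open Scope ring_scope.

Section Defs.
Context {R : realType}.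

Definition dot2 (a b : R * R) : R := a.1 * b.1 + a.2 * b.2.
Definition eucl (a : R * R) : R := Num.sqrt (a.1 ^+ 2 + a.2 ^+ 2).

(** Omega_1 = { omega in C([0,1]; R^2) : omega 0 = 0 }.
    A continuous path on [0,1] is represented canonically by the function
    R -> R^2 that is constant outside [0,1] (value at the clamped time). *)
Definition clamp01 (t : R) : R := Num.min (Num.max t 0) 1.

Record path2 := Path2 {
  pth :> R -> R * R ;
  pth_cont : continuous pth ;
  pth_clamp : forall t, pth t = pth (clamp01 t) ;
  pth0 : pth 0 = 0 }.

Lemma zero_path_cont : continuous (fun _ : R => (0 : R * R)).
Proof. move=> x; exact: cvg_cst. Qed.

Definition zero_path : path2 :=
  @Path2 (fun _ => 0) zero_path_cont (fun _ => erefl) erefl.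

HB.instance Definition _ := gen_eqMixin path2.
HB.instance Definition _ := gen_choiceMixin path2.
HB.instance Definition _ := isPointed.Build path2 zero_path.

Definition supdist (x y : path2) : R :=
  sup [set eucl (x t - y t) | t in `[0, 1]].

Definition sup_open : set (set path2) :=
  [set A | forall x, A x -> exists2 r : R, 0 < r &
            forall y, supdist x y < r -> A y].

Definition Omega1 := g_sigma_algebraType sup_open.

(** Wiener measure: a probability on Omega_1 whose finite dimensional
    distributions are those of a standard planar Brownian motion
    (centered Gaussian, covariance min(s,t) Id_2), via the characteristic
    function E[exp(i sum_k theta_k . x(t_k))] = exp(-1/2 sum_{j,k} min(t_j,t_k) theta_j.theta_k). *)
Definition is_wiener (W : probability Omega1 R) : Prop :=
  forall (n : nat) (t : 'I_n -> R) (theta : 'I_n -> R * R),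
    (forall k, 0 <= t k <= 1) ->
    let S := fun x : Omega1 => \sum_(k < n) dot2 (theta k) (x (t k)) in
    (\int[W]_x (cos (S x))%:E =
       (expR (- (2^-1) * \sum_(j < n) \sum_(k < n)
                 Num.min (t j) (t k) * dot2 (theta j) (theta k)))%:E)%E /\
    (\int[W]_x (sin (S x))%:E = 0)%E.

Fixpoint iterD {V : normedModType R} (vs : seq V) (f : V -> R^o) : V -> R^o :=
  match vs with
  | [::] => f
  | v :: vs' => fun x => derive (iterD vs' f) x v
  end.
Definition smooth {V : normedModType R} (f : V -> R^o) : Prop :=
  forall (vs : seq V) (v x : V), derivable (iterD vs f) x v.

Definition conv_phi (phi : R -> R) (s : R) : R :=
  Rintegral lebesgue_measure setT (fun u => phi u * phi (u - s)).
Definition conv_psi (psi : R * R -> R) (y : R * R) : R :=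
  Rintegral (lebesgue_measure \x lebesgue_measure)%E setT
    (fun z : R * R => psi z * psi (y - z)).
Definition Rker phi psi (s : R) (y : R * R) : R := conv_phi phi s * conv_psi psi y.

Definition beta_eps (bh eps : R) : R := bh / Num.sqrt (ln (eps^-1)).

Definition int01sq (f : R -> R -> R) : R :=
  Rintegral lebesgue_measure `[0, 1]
    (fun s => Rintegral lebesgue_measure `[0, 1] (fun u => f s u)).

Definition Hdens phi psi bh eps (x : Omega1) : R :=
  expR ((beta_eps bh eps) ^+ 2 / 2 *
        int01sq (fun s u => Rker phi psi (s - u) (x s - x u))).
Definition Zeps phi psi bh eps (W : probability Omega1 R) : R :=
  Rintegral W setT (Hdens phi psi bh eps).
(** density d hat P_1^(eps) / d W_1 *)
Definition Pdens phi psi bh eps (W : probability Omega1 R) (x : Omega1) : R :=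
  Hdens phi psi bh eps x / Zeps phi psi bh eps W.

Definition Ieps phi psi bh eps (x y : Omega1) : R :=
  (beta_eps bh eps) ^+ 2 *
    int01sq (fun s u => Rker phi psi (s - u) (y s + x 1 - x u)).

Definition intPhat phi psi bh eps (W : probability Omega1 R) (A : set Omega1) (g : Omega1 -> R) : \bar R :=
  (\int[W]_(y in A) (g y * Pdens phi psi bh eps W y)%:E)%E.

Definition pihat phi psi bh eps (W : probability Omega1 R) (rho : R) (Psi : Omega1 -> R)
    (x : Omega1) (A : set Omega1) : \bar R :=
  (intPhat phi psi bh eps W A (fun y => expR (Ieps phi psi bh eps x y) * Psi y)%R
   * ((rho * Psi x)^-1)%:E)%E.

Definition dTV (mu nu : set Omega1 -> \bar R) : \bar R :=
  ereal_sup [set `|(mu A - nu A)%E|%E | A in [set A | measurable A]].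

End Defs.

(* Main.v *)
Require Import Defs.
From HB Require Import structures.
From mathcomp Require Import all_boot all_order all_algebra.
From mathcomp Require Import all_classical all_reals all_analysis.
From mathcomp Require Import ring lra.
Import Order.TTheory GRing.Theory Num.Theory.
Import numFieldNormedType.Exports.
Local Open Scope classical_set_scope.
Local Open Scope ring_scope.

Section LowerInt.
Context d (T : measurableType d) (R : realType) (mu : {measure set T -> \bar R}).
Import HBNNSimple.

Lemma T1 (f g : T -> R) : (forall x, 0 <= f x) -> (forall x, f x <= g x) ->
  (\int[mu]_x (f x)%:E <= \int[mu]_x (g x)%:E)%E.
Proof.
move=> f0 fg.
have g0 x : 0 <= g x by apply: le_trans (fg x).
rewrite !ge0_integralE ?patch_setT /=; last 2 first.
- by move=> x _; rewrite lee_fin.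
- by move=> x _; rewrite lee_fin.
apply: ereal_sup_le => _ [h hf <-]; exists h => //= x.
by apply: le_trans (hf x) _; rewrite lee_fin.
Qed.

Lemma T2le (k : R) (f : T -> R) : 0 < k -> (forall x, 0 <= f x) ->
  (\int[mu]_x (k * f x)%:E <= k%:E * \int[mu]_x (f x)%:E)%E.
Proof.
move=> k0 f0.
rewrite !ge0_integralE ?patch_setT /=; last 2 first.
- by move=> x _; rewrite lee_fin.
- by move=> x _; rewrite lee_fin mulr_ge0 // ltW.
apply: ge_ereal_sup => _ [h hf <-].
have ki : 0 <= k^-1 by rewrite invr_ge0 ltW.
pose h' := scale_nnsfun h ki.
have -> : sintegral mu h = sintegral mu (cst k \* h')%R.
  apply: eq_sintegral => x /=; rewrite /h' /= mulrA mulfV ?mul1r //.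
  by rewrite gt_eqF.
rewrite sintegralrM lee_pmul2l ?lte_fin //.
  apply: ereal_sup_ubound; exists h' => //= x.
  have := hf x; rewrite !lee_fin => hx.
  by rewrite ler_pdivrMl.
Qed.

Lemma T2 (k : R) (f : T -> R) : 0 <= k -> (forall x, 0 <= f x) ->
  (\int[mu]_x (k * f x)%:E = k%:E * \int[mu]_x (f x)%:E)%E.
Proof.
move=> k0 f0; have [->|kgt0] := eqVneq k 0.
  rewrite mul0e; under eq_integral do rewrite mul0r.
  by rewrite integral0.
have kp : 0 < k by rewrite lt_def kgt0.
apply/le_anti; rewrite T2le //=.
have ki : 0 < k^-1 by rewrite invr_gt0.
have := @T2le k^-1 (fun x => k * f x) ki (fun x => mulr_ge0 (ltW kp) (f0 x)).
under eq_integral do rewrite mulrA mulVf ?gt_eqF // mul1r.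
move=> H; rewrite -(@lee_pmul2l _ k%:E) ?lte_fin // in H.
  by rewrite muleA -EFinM mulfV ?gt_eqF // mul1e in H.
Qed.

Lemma T3 (g f : T -> R) : measurable_fun setT g ->
  (forall x, 0 <= g x) -> (forall x, 0 <= f x) ->
  (\int[mu]_x (g x + f x)%:E <= \int[mu]_x (g x)%:E + \int[mu]_x (f x)%:E)%E.
Proof.
move=> mg g0 f0.
rewrite [X in (X <= _)%E]ge0_integralE ?patch_setT /=; last first.
  by move=> x _; rewrite lee_fin addr_ge0.
apply: ge_ereal_sup => _ [h hf <-] /=.
pose h' := fun x => Num.max (h x - g x) 0.
have mh : measurable_fun setT (h : T -> R) by [].
have mh' : measurable_fun setT h'.
  apply: measurable_realfun.measurable_maxr; last exact: measurable_cst.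
  exact: measurable_realfun.measurable_funB.
have h'0 x : 0 <= h' x by rewrite /h' le_max lexx orbT.
have -> : sintegral mu h = (\int[mu]_x (h x)%:E)%E.
  by rewrite integral_nnsfun // patch_setT.
apply: (@le_trans _ _ (\int[mu]_x (h' x + g x)%:E)%E).
  apply: ge0_le_integral => //.
  - by move=> x _; rewrite lee_fin.
  - by apply/measurable_realfun.measurable_EFinP.
  - by apply/measurable_realfun.measurable_EFinP; apply: measurable_realfun.measurable_funD.
  - move=> x _; rewrite lee_fin /h' -lerBlDr le_max lexx //.
rewrite (@ge0_integralD _ _ _ mu setT measurableT (fun x => (h' x)%:E) (fun x => (g x)%:E)) //; first last.
- by apply/measurable_realfun.measurable_EFinP.
- by move=> x _; rewrite lee_fin.
- by apply/measurable_realfun.measurable_EFinP.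
- by move=> x _; rewrite lee_fin.
rewrite addeC; apply: leeD => //.
apply: T1 => // x; rewrite /h' ge_max f0 andbT lerBlDl.
by have := hf x; rewrite lee_fin.
Qed.

End LowerInt.

Section Core.
Context d (T : measurableType d) (R : realType) (W : probability T R).

Lemma dom_int (A : set T) (F : T -> R) :
  (\int[W]_(y in A) (F y)%:E = \int[W]_y (\1_A y * F y)%:E)%E.
Proof.
rewrite integral_mkcond; apply: eq_integral => y _.
rewrite /patch indicE; case: (y \in A) => /=; by rewrite ?mul1r ?mul0r.
Qed.

Lemma int_indic (A : set T) : measurable A ->
  (\int[W]_y (\1_A y)%:E = W A)%E.
Proof. by move=> mA; rewrite integral_indic // setIT. Qed.

Lemma int_one : (\int[W]_y (1 : R)%:E = 1)%E.
Proof.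
have -> : (fun y : T => (1 : R)%:E) = cst 1%E by [].
by rewrite integral_cst // /= probability_setT mul1e.
Qed.

Lemma core (X : T -> T -> R) (H : T -> R) (Z : R) (Psi : T -> R) (rho C : R)
  (F : T -> T -> R) (K theta : R) :
  (forall x y, 0 <= X x y) -> (forall y, 1 <= H y) -> 1 <= Z ->
  (\int[W]_y (H y)%:E = Z%:E)%E ->
  measurable_fun setT Psi -> (forall y, 0 <= Psi y <= C) -> 0 < rho ->
  (\int[W]_y (Psi y * (H y / Z))%:E = 1)%E ->
  (forall x, \int[W]_y (expR (X x y) * Psi y * (H y / Z))%:E = (rho * Psi x)%:E)%E ->
  (forall x y, 0 <= F x y) -> 0 <= K -> (forall x, \int[W]_y (F x y)%:E <= K%:E)%E ->
  0 <= theta -> (forall x y, expR (X x y) * H y <= 1 + theta * F x y) ->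
  theta * K <= 2^-1 ->
  forall x (A : set T), measurable A ->
  exists p : R,
   (\int[W]_(y in A) (expR (X x y) * Psi y * (H y / Z))%:E * ((rho * Psi x)^-1)%:E = p%:E)%E /\
   fine (W A) * (1 - theta * K) / (1 + theta * K) <= p <=
   (fine (W A) + theta * K) / (1 - theta * K).
Proof.
move=> X0 H1 Z1 HZ mPsi PsiC rho0 norm eigen F0 K0 Fint th0 pw dle x A mA.
set delta := theta * K.
have d0 : 0 <= delta by rewrite mulr_ge0.
have Z0 : 0 < Z by apply: lt_le_trans Z1.
have Psi0 y : 0 <= Psi y by case/andP: (PsiC y).
have eX z y : 1 <= expR (X z y).
  by apply: le_trans (expR_ge1Dx _); rewrite lerDl.
have H0 y : 0 <= H y by apply: le_trans (H1 y).
have HZ0 y : 0 <= H y / Z by rewrite divr_ge0 // ltW.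
have u1 z : 1 <= rho * Psi z.
  rewrite -lee_fin -eigen -norm; apply: T1.
    by move=> y; rewrite mulr_ge0.
  move=> y; rewrite -mulrA ler_peMl // mulr_ge0 //.
have rho1 : 1 <= rho.
  have e1 : (rho%:E = \int[W]_y (rho * (Psi y * (H y / Z)))%:E)%E.
    by rewrite T2 ?ltW // ?norm ?mule1 // => y; rewrite mulr_ge0.
  have e2 : (\int[W]_y (Z^-1 * H y)%:E = 1)%E.
    by rewrite T2 ?invr_ge0 ?ltW // HZ -EFinM mulVf ?gt_eqF.
  rewrite -lee_fin e1 -e2; apply: T1.
  - by move=> y; rewrite mulr_ge0 // invr_ge0 ltW.
  - move=> y; rewrite mulrA; apply: le_trans (ler_wpM2r (HZ0 y) (u1 y)).
    by rewrite mul1r mulrC.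
set E := [set rho * Psi z | z in setT].
have Eub : has_ubound E.
  exists (rho * C) => _ [z _ <-]; rewrite ler_pM2l //; by case/andP: (PsiC z).
have Esup z : rho * Psi z <= sup E by apply: ub_le_sup => //; exists z.
set S := sup E.
have S1 : 1 <= S by apply: le_trans (Esup x).
have PsiS y : Psi y <= S / rho by rewrite ler_pdivlMr // mulrC Esup.
have rZ1 : 1 <= rho * Z by rewrite -[1]mulr1 ler_pM.
have Zi0 : 0 <= Z^-1 by rewrite invr_ge0 ltW.
have S0 : 0 <= S by apply: le_trans S1.
have Sr0 : 0 <= S / rho by rewrite divr_ge0 // ltW.
have cq0 : 0 <= S / rho * Z^-1 by rewrite mulr_ge0.
set G := fun z y => expR (X z y) * Psi y * (H y / Z).
have GE z y : G z y = Psi y * Z^-1 * (expR (X z y) * H y).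
  by rewrite /G; ring.
have G0 z y : 0 <= G z y.
  by rewrite GE !mulr_ge0 //; apply: le_trans (eX z y).
have Sd : S <= 1 + delta * S.
  apply: ge_sup; first by exists (rho * Psi x), x.
  move=> _ [z _ <-].
  set c := theta * (S / rho * Z^-1).
  have c0 : 0 <= c by rewrite mulr_ge0.
  have pwz y : G z y <= Psi y * Z^-1 + c * F z y.
    have h1 := ler_wpM2l (mulr_ge0 (Psi0 y) Zi0) (pw z y).
    have h2 : theta * (Psi y * Z^-1) * F z y <= c * F z y.
      by apply: ler_wpM2r => //; apply: ler_wpM2l => //; apply: ler_wpM2r.
    rewrite GE; apply: le_trans h1 _.
    by rewrite mulrDr mulr1 lerD2l mulrA [_ * theta]mulrC.
  have : ((rho * Psi z)%:E <= 1 + (c * K)%:E)%E.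
    rewrite -eigen.
    apply: le_trans (@T1 _ _ _ W (G z) (fun y => Psi y * Z^-1 + c * F z y) (G0 z) pwz) _.
    apply: le_trans (@T3 _ _ _ W (fun y => Psi y * Z^-1) (fun y => c * F z y) _ _ _) _.
    - by apply: measurable_realfun.measurable_funM => //; exact: measurable_cst.
    - by move=> y; rewrite mulr_ge0.
    - by move=> y; rewrite mulr_ge0.
    apply: leeD.
      rewrite -norm; apply: T1; first by move=> y; rewrite mulr_ge0.
      move=> y; apply: ler_wpM2l => //; rewrite -[X in X <= _]mul1r; exact: ler_wpM2r (H1 y).
    rewrite T2 //.
    apply: le_trans (lee_wpmul2l (x:=c%:E) _ (Fint z)) _; first by rewrite lee_fin.
    by rewrite -EFinM.
  rewrite -EFinD lee_fin => h; apply: le_trans h _.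
  have q : S / rho / Z <= S.
    by rewrite ler_pdivrMr // ler_pdivrMr // -mulrA ler_peMr // mulrC.
  rewrite lerD2l /c.
  have -> : theta * (S / rho / Z) * K = (theta * K) * (S / rho / Z) by ring.
  by apply: ler_wpM2l.
have EH0 z y : 0 <= expR (X z y) * H y by rewrite mulr_ge0 // expR_ge0.
have pwG z y : G z y <= S / rho / Z * (1 + theta * F z y).
  rewrite GE; apply: ler_pM => //; first by rewrite mulr_ge0.
  exact: ler_wpM2r.
have Sgt0 : 0 < S by apply: lt_le_trans S1.
have rZd : rho * Z <= 1 + delta.
  have hS : S <= S / rho / Z * (1 + delta).
    apply: ge_sup; first by exists (rho * Psi x), x.
    move=> _ [z _ <-].
    rewrite -lee_fin -eigen.
    apply: le_trans (@T1 _ _ _ W (G z) (fun y => S / rho / Z * (1 + theta * F z y)) (G0 z) (pwG z)) _.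
    rewrite T2 //; last by move=> y; rewrite addr_ge0 // mulr_ge0.
    set q := S / rho / Z.
    rewrite [X in (_ <= X)%E]EFinM; apply: lee_wpmul2l; first by rewrite lee_fin.
    apply: le_trans (@T3 _ _ _ W (fun=> 1) (fun y => theta * F z y) (measurable_cst _) _ _) _ => //.
      by move=> y; rewrite mulr_ge0.
    rewrite int_one T2 // EFinD; apply: leeD => //.
    apply: le_trans (lee_wpmul2l (x:=theta%:E) _ (Fint z)) _; first by rewrite lee_fin.
    by rewrite -EFinM.
  have e : S / rho / Z * (1 + delta) = S * (1 + delta) / (rho * Z).
    by rewrite invfM; ring.
  by move: hS; rewrite e ler_pdivlMr ?mulr_gt0 // ler_pM2l.
set a := fine (W A).
have Wa : W A = a%:E.
  rewrite /a fineK // fin_numElt (lt_le_trans ltNy0 (measure_ge0 _ _)) /=.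
  exact: le_lt_trans (probability_le1 _ mA) (ltry 1).
have a0 : 0 <= a by rewrite /a fine_ge0 // measure_ge0.
rewrite dom_int.
set J := (\int[W]_y (\1_A y * _)%:E)%E.
set q := S / rho / Z.
have q0 : 0 <= q by [].
have Jlo : ((a / (rho * Z))%:E <= J)%E.
  have e : (\int[W]_y ((rho * Z)^-1 * \1_A y)%:E = (a / (rho * Z))%:E)%E.
    rewrite T2; last 2 first.
    - by rewrite invr_ge0 ltW // mulr_gt0.
    - by move=> y; rewrite indicE.
    by rewrite int_indic // Wa -EFinM mulrC.
  rewrite -e /J.
  apply: (@T1 _ _ _ W (fun y => (rho * Z)^-1 * \1_A y) (fun y => \1_A y * G x y)).
    by move=> y; rewrite mulr_ge0 // ?invr_ge0 ?ltW ?mulr_gt0 // indicE.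
  move=> y; rewrite indicE; case: (y \in A) => /=; rewrite ?mulr1 ?mul1r ?mulr0 ?mul0r //.
  rewrite GE invfM; apply: le_trans (_ : Psi y * Z^-1 * 1 <= _).
    rewrite mulr1; apply: ler_wpM2r => //.
    by rewrite -[rho^-1]mul1r ler_pdivrMr // mulrC.
  apply: ler_wpM2l; first by rewrite mulr_ge0.
  by rewrite mulr_ege1.
have Jhi : (J <= (q * (a + delta))%:E)%E.
  rewrite /J.
  apply: le_trans (@T1 _ _ _ W (fun y => \1_A y * G x y) (fun y => q * (\1_A y + theta * F x y)) _ _) _.
  - by move=> y; rewrite indicE mulr_ge0.
  - move=> y; rewrite indicE; case: (y \in A) => /=; rewrite ?mul1r ?mul0r ?add0r.
      exact: pwG.
    by apply: mulr_ge0 => //; apply: mulr_ge0.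
  rewrite T2 //; last by move=> y; rewrite indicE addr_ge0 ?mulr_ge0.
  rewrite [X in (_ <= X)%E]EFinM; apply: lee_wpmul2l; first by rewrite lee_fin.
  apply: le_trans (@T3 _ _ _ W (\1_A) (fun y => theta * F x y) _ _ _) _ => //.
    by move=> y; rewrite mulr_ge0.
  rewrite int_indic // Wa T2 // EFinD; apply: leeD => //.
  apply: le_trans (lee_wpmul2l (x:=theta%:E) _ (Fint x)) _; first by rewrite lee_fin.
  by rewrite -EFinM.
have Jfin : J = (fine J)%:E.
  rewrite fineK // fin_numElt (lt_le_trans _ Jlo) ?ltNyr //=.
  exact: le_lt_trans Jhi (ltry _).
exists (fine J / (rho * Psi x)); split; first by rewrite Jfin -EFinM.
move: Jlo Jhi; rewrite Jfin !lee_fin; set j := fine J => jlo jhi.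
change (fine j%:E) with j.
set u := rho * Psi x.
have u1' : 1 <= u by exact: u1.
have uS : u <= S by exact: Esup.
have P0 : 0 < rho * Z by rewrite mulr_gt0.
have jl : a <= j * (rho * Z) by rewrite -ler_pdivrMr.
have jh : j * (rho * Z) <= S * (a + delta).
  have e : q * (a + delta) = S * (a + delta) / (rho * Z) by rewrite /q invfM; ring.
  by rewrite -ler_pdivlMr // -e.
have j0 : 0 <= j.
  by rewrite -(pmulr_lge0 _ P0); apply: le_trans jl.
have u0 : 0 < u by apply: lt_le_trans u1'.
have dle' : delta <= 2^-1 by [].
have dl1 : 0 < 1 - delta by lra.
have dp1 : 0 < 1 + delta by lra.
apply/andP; split.
  rewrite ler_pdivrMr // mulrAC ler_pdivlMr //.
  have s1 : a * (1 - delta) * u <= a * (1 - delta) * S by apply: ler_wpM2l => //; rewrite mulr_ge0 // ltW.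
  have s2 : a * (1 - delta) * S <= a by nra.
  have s3 : j * (rho * Z) <= j * (1 + delta) by nra.
  lra.
rewrite ler_pdivrMr // mulrAC ler_pdivlMr //.
have t1 : j <= S * (a + delta) by nra.
have t2 : j * (1 - delta) <= S * (a + delta) * (1 - delta) by nra.
have t3 : S * (a + delta) * (1 - delta) <= a + delta by nra.
have t4 : a + delta <= (a + delta) * u by nra.
lra.
Qed.

End Core.

Section Extra.
Context d (T : measurableType d) (R : realType) (W : probability T R).

Lemma Wfin (A : set T) : measurable A -> W A = (fine (W A))%:E.
Proof.
move=> mA; rewrite fineK // fin_numElt (lt_le_trans ltNy0 (measure_ge0 _ _)) /=.
exact: le_lt_trans (probability_le1 _ mA) (ltry 1).
Qed.

Lemma Wle1 (A : set T) : measurable A -> 0 <= fine (W A) <= 1.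
Proof.
move=> mA; rewrite fine_ge0 ?measure_ge0 //=.
have := probability_le1 W mA; rewrite (@Wfin A mA) lee_fin //.
Qed.

Lemma Zlemma (H Psi : T -> R) : (forall y, 1 <= H y) ->
  (\int[W]_y (Psi y * (H y / fine (\int[W]_y (H y)%:E)))%:E = 1)%E ->
  1 <= fine (\int[W]_y (H y)%:E)%E /\
  (\int[W]_y (H y)%:E = (fine (\int[W]_y (H y)%:E))%:E)%E.
Proof.
move=> H1 norm.
have I1 : (1 <= \int[W]_y (H y)%:E)%E.
  by rewrite -(@int_one _ _ _ W); apply: T1 => // y.
move: norm I1; case: (\int[W]_y (H y)%:E)%E => [r| |] /= norm I1.
- by rewrite lee_fin in I1.
- move: norm; under eq_integral do rewrite invr0 !mulr0.
  rewrite integral0 => /(congr1 fine) /= /eqP.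
  by rewrite eq_sym oner_eq0.
- by move: I1; rewrite leeNy_eq.
Qed.

End Extra.

Lemma expR_conv (R : realType) (t Y : R) : 0 <= t <= 1 -> expR (t * Y) <= 1 - t + t * expR Y.
Proof.
move=> t01.
have tin : Itv.spec (@Itv.num_sem R) (Itv.Real `[0%Z, 1%Z]) t.
  by rewrite /Itv.spec /Itv.num_sem /= num_real /= in_itv /= ?mulr0z ?mulr1z.
pose tt : {i01 R} := Itv.mk tin.
have := convex_expR tt Y 0.
by rewrite !convR_line_path /line_path /= expR0 mulr0 add0r mulr1.
Qed.

Lemma Rint_ge0 d (T : measurableType d) (R : realType) (mu : {measure set T -> \bar R})
  (D : set T) (f : T -> R) : (forall x, 0 <= f x) -> 0 <= Rintegral mu D f.
Proof. by move=> f0; apply: fine_ge0; apply: integral_ge0 => x _; rewrite lee_fin. Qed.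

Lemma int01sq_ge0 (R : realType) (f : R -> R -> R) : (forall s u, 0 <= f s u) -> 0 <= int01sq f.
Proof. by move=> f0; apply: Rint_ge0 => s; apply: Rint_ge0. Qed.

Lemma Rker_ge0 (R : realType) (phi : R -> R) (psi : R * R -> R) s y :
  (forall s, 0 <= phi s) -> (forall y, 0 <= psi y) -> 0 <= Rker phi psi s y.
Proof.
move=> p0 q0; apply: mulr_ge0; first by apply: Rint_ge0 => u; rewrite mulr_ge0.
by apply: Rint_ge0 => u; rewrite mulr_ge0.
Qed.

Theorem proposition3p1 (R : realType)
  (phi : R -> R) (psi : R * R -> R)
  (phi_ge0 : forall s, 0 <= phi s) (psi_ge0 : forall y, 0 <= psi y)
  (phi_smooth : smooth (phi : R^o -> R^o)) (psi_smooth : smooth (psi : R * R -> R^o))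
  (phi_supp : forall s, phi s != 0 -> 0 <= s <= 1)
  (psi_supp : forall y, psi y != 0 -> eucl y <= 2^-1)
  (psi_sym : forall y, psi (- y) = psi y)
  (bh : R) (bh_gt0 : 0 < bh)
  (W : probability (@Omega1 R) R) (W_wiener : is_wiener W)
  (rho : R -> R) (Psi : R -> @Omega1 R -> R)
  (rho_gt0 : forall eps, 0 < eps < 1 -> 0 < rho eps)
  (Psi_meas : forall eps, 0 < eps < 1 -> measurable_fun setT (Psi eps))
  (Psi_bounds : forall eps, 0 < eps < 1 ->
     exists c C : R, [/\ 0 < c, 0 < C & forall y, c <= Psi eps y <= C])
  (Psi_norm : forall eps, 0 < eps < 1 ->
     intPhat phi psi bh eps W setT (Psi eps) = 1%E)
  (Psi_eigen : forall eps, 0 < eps < 1 -> forall x,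
     intPhat phi psi bh eps W setT
       (fun y => expR (Ieps phi psi bh eps x y) * Psi eps y)
     = (rho eps * Psi eps x)%:E)
  (rho_largest : forall eps, 0 < eps < 1 ->
     forall (lam : R) (g : @Omega1 R -> R),
       measurable_fun setT g -> (exists M : R, forall y, `|g y| <= M) ->
       (exists y, g y != 0) ->
       (forall x, intPhat phi psi bh eps W setT
                    (fun y => expR (Ieps phi psi bh eps x y) * g y)
                  = (lam * g x)%:E) ->
       lam <= rho eps) :
  (forall eta : R, 0 < eta -> exists2 eps0 : R, 0 < eps0 &
     forall eps, 0 < eps < 1 -> eps < eps0 -> forall x : @Omega1 R,
       (dTV (pihat phi psi bh eps W (rho eps) (Psi eps) x) W <= eta%:E)%E)
  /\
  (forall gamma : R, 0 < gamma < 1 -> exists2 eps0 : R, 0 < eps0 &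
     forall eps, 0 < eps < 1 -> eps < eps0 -> forall (x : @Omega1 R) (A : set (@Omega1 R)),
       measurable A ->
       (gamma%:E * W A <= pihat phi psi bh eps W (rho eps) (Psi eps) x A)%E).
Proof.
have lnpos eps : 0 < eps < 1 -> 0 < ln (eps^-1).
  by case/andP => e0 e1; apply: ln_gt0; rewrite invf_gt1.
have b2 eps : 0 < eps < 1 -> beta_eps bh eps ^+ 2 = bh ^+ 2 / ln (eps^-1).
  move=> ei; rewrite /beta_eps expr_div_n sqr_sqrtr // ltW //; exact: lnpos.
set e1 : R := 2^-1.
have e1i : 0 < e1 < 1 by rewrite /e1; apply/andP; split; lra.
set a := beta_eps bh e1 ^+ 2.
have a0 : 0 < a by rewrite /a b2 // divr_gt0 ?exprn_gt0 // lnpos.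
have Inn eps x y : 0 <= Ieps phi psi bh eps x y.
  by rewrite mulr_ge0 ?sqr_ge0 // int01sq_ge0 // => s u; exact: Rker_ge0.
have Hd1 eps y : 1 <= Hdens phi psi bh eps y.
  apply: le_trans (expR_ge1Dx _); rewrite lerDl mulr_ge0 ?divr_ge0 ?sqr_ge0 //.
  by rewrite int01sq_ge0 // => s u; exact: Rker_ge0.
have Zf eps : 0 < eps < 1 -> 1 <= Zeps phi psi bh eps W /\
    (\int[W]_y (Hdens phi psi bh eps y)%:E = (Zeps phi psi bh eps W)%:E)%E.
  by move=> ei; apply: (@Zlemma _ _ _ W (Hdens phi psi bh eps) (Psi eps)) => //; exact: (Psi_norm _ ei).
have [c1 [C1 [c10 C10 PsiC1]]] := Psi_bounds _ e1i.
have [Z11 HZ1] := Zf _ e1i.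
set Z1 := Zeps phi psi bh e1 W.
have Z10 : 0 < Z1 by apply: lt_le_trans Z11.
set K := Z1 / c1 * (rho e1 * C1).
have r10 : 0 < rho e1 by exact: rho_gt0.
have K0 : 0 <= K.
  by apply: mulr_ge0; [apply: divr_ge0; apply: ltW | apply: mulr_ge0; apply: ltW].
pose F := fun x y => expR (Ieps phi psi bh e1 x y) * Hdens phi psi bh e1 y.
have F0 x y : 0 <= F x y by rewrite mulr_ge0 ?expR_ge0 // (le_trans ler01).
have Fint x : (\int[W]_y (F x y)%:E <= K%:E)%E.
  have pt y : F x y <= Z1 / c1 * (expR (Ieps phi psi bh e1 x y) * Psi e1 y *
                         (Hdens phi psi bh e1 y / Z1)).
    have -> : Z1 / c1 * (expR (Ieps phi psi bh e1 x y) * Psi e1 y *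
                         (Hdens phi psi bh e1 y / Z1)) =
              F x y * (Psi e1 y / c1).
      by rewrite /F; field; rewrite ?gt_eqF.
    rewrite -[X in X <= _]mulr1; apply: ler_wpM2l => //.
    by rewrite ler_pdivlMr // mul1r; case/andP: (PsiC1 y).
  apply: le_trans (@T1 _ _ _ W (F x) _ (F0 x) pt) _.
  rewrite T2; last 2 first.
  - by rewrite divr_ge0 // ltW.
  - move=> y; apply: mulr_ge0; [apply: mulr_ge0; [exact: expR_ge0 | ] | ].
      by case/andP: (PsiC1 y) => h _; apply: le_trans h; apply: ltW.
    by apply: divr_ge0; [exact: le_trans ler01 (Hd1 _ _) | exact: ltW].
  rewrite [X in (_ * X <= _)%E](_ : _ = ((rho e1 * Psi e1 x)%:E)); last first.
    exact: Psi_eigen.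
  rewrite -EFinM lee_fin; apply: ler_wpM2l; first by rewrite divr_ge0 // ltW.
  by apply: ler_wpM2l; [apply: ltW | case/andP: (PsiC1 x)].
have pw eps x y : 0 < eps < 1 -> 0 <= beta_eps bh eps ^+ 2 / a <= 1 ->
    expR (Ieps phi psi bh eps x y) * Hdens phi psi bh eps y <=
    1 + (beta_eps bh eps ^+ 2 / a) * F x y.
  move=> ei th01; rewrite /F /Hdens /Ieps -!expRD -/a.
  set J := int01sq _.
  set L := int01sq _.
  set b := beta_eps bh eps ^+ 2 in th01 *.
  rewrite (_ : b * J + b / 2 * L = b / a * (a * J + a / 2 * L)); last first.
    by field; rewrite gt_eqF.
  have hc := @expR_conv R _ (a * J + a / 2 * L) th01.
  case/andP: th01 => th0 _.
  lra.
have key t : 0 < t -> t <= 2^-1 -> exists2 eps0 : R, 0 < eps0 &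
    forall eps, 0 < eps < 1 -> eps < eps0 -> forall (x : Omega1) (A : set Omega1),
    measurable A -> exists p : R,
      pihat phi psi bh eps W (rho eps) (Psi eps) x A = p%:E /\
      exists2 dl : R, 0 <= dl <= t &
        fine (W A) * (1 - dl) / (1 + dl) <= p <= (fine (W A) + dl) / (1 - dl).
  move=> t0 t12.
  set s := Num.min (t / (K + 1)) 1.
  have K1 : 0 < K + 1 by lra.
  have s0 : 0 < s by rewrite lt_min divr_gt0 // ltr01.
  have l2 : 0 < ln (2 : R) by apply: ln_gt0; lra.
  set L := ln (2 : R) / s.
  exists (Num.min e1 (expR (- L))).
    by rewrite lt_min expR_gt0 andbT; case/andP: e1i.
  move=> eps ei el x A mA.
  have [e0 _] := andP ei.
  have lt1 : eps < expR (- L) by apply: lt_le_trans el _; rewrite ge_min lexx orbT.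
  have lg : L < ln (eps^-1).
    have := lt1; rewrite -(@ltr_ln _ eps) ?posrE ?expR_gt0 // expRK => h.
    by rewrite lnV ?posrE //; lra.
  have th_le : beta_eps bh eps ^+ 2 / a <= s.
    have lne : 0 < ln (eps^-1) by apply: lnpos.
    rewrite /a !b2 // /e1 invrK.
    have -> : bh ^+ 2 / ln eps^-1 / (bh ^+ 2 / ln 2) = ln (2 : R) / ln eps^-1.
      by field; rewrite ?gt_eqF ?exprn_gt0.
    rewrite ler_pdivrMr //.
    have e : ln (2 : R) = L * s by rewrite /L divfK // gt_eqF.
    rewrite e; nra.
  set th := beta_eps bh eps ^+ 2 / a.
  have th0 : 0 <= th by rewrite divr_ge0 ?sqr_ge0 // ltW.
  have th1 : th <= 1 by apply: le_trans th_le _; rewrite ge_min lexx orbT.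
  have dlt : th * K <= t.
    have s1 : s <= t / (K + 1) by rewrite ge_min lexx.
    have s2 : t / (K + 1) * (K + 1) = t by rewrite divfK // gt_eqF.
    have q0 : 0 <= t / (K + 1) by rewrite divr_ge0 // ltW.
    have h1 : th * K <= s * K := ler_wpM2r K0 th_le.
    have h2 : s * K <= t / (K + 1) * K := ler_wpM2r K0 s1.
    have h3 : t / (K + 1) * K <= t / (K + 1) * (K + 1).
      by apply: ler_wpM2l => //; lra.
    lra.
  have [Zge1 HZ] := Zf _ ei.
  have [ce [Ce [ce0 Ce0 PsiCe]]] := Psi_bounds _ ei.
  have PsiCe' y : 0 <= Psi eps y <= Ce.
    by case/andP: (PsiCe y) => h1 ->; rewrite andbT; apply: le_trans h1; apply: ltW.
  have th01 : 0 <= th <= 1 by rewrite th0 th1.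
  have := @core _ _ _ W (Ieps phi psi bh eps) (Hdens phi psi bh eps)
    (Zeps phi psi bh eps W) (Psi eps) (rho eps) Ce F K th (Inn eps) (Hd1 eps)
    Zge1 HZ (Psi_meas _ ei) PsiCe' (rho_gt0 _ ei) (Psi_norm _ ei) (Psi_eigen _ ei)
    F0 K0 Fint th0 (fun x y => pw eps x y ei th01) _ x A mA.
  case.
    by apply: le_trans dlt _.
  move=> p [ep bd]; exists p; split; first exact: ep.
  by exists (th * K) => //; rewrite mulr_ge0 // dlt.
split.
  move=> eta eta0.
  set t := Num.min (eta / 4) (2^-1).
  have t0 : 0 < t by rewrite lt_min divr_gt0 //=; lra.
  have tle : t <= 2^-1 by rewrite /t ge_min lexx orbT.
  have tle' : t <= eta / 4 by rewrite /t ge_min lexx.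
  have [eps0 eps00 Hk] := key t t0 tle.
  exists eps0 => // eps ei el x.
  apply: ge_ereal_sup => _ [A mA <-].
  have [p [ep [dl dl0 bd]]] := Hk eps ei el x A mA.
  rewrite ep (@Wfin _ _ _ W A mA) -EFinB abse_EFin lee_fin.
  have [w0 w1] := andP (@Wle1 _ _ _ W A mA).
  move: bd; set w := fine (W A) => /andP[lo hi].
  move: w0 w1; rewrite -/w => w0 w1.
  have [dl00 dlt] := andP dl0.
  have dle : dl <= eta / 4 by apply: le_trans dlt tle'.
  have dlh : dl <= 2^-1 by apply: le_trans dlt tle.
  have dp : 0 < 1 + dl by lra.
  have dm : 0 < 1 - dl by lra.
  rewrite ler_pdivrMr // in lo.
  rewrite ler_pdivlMr // in hi.
  have hwd : 0 <= w * (1 - dl) by rewrite mulr_ge0 // ltW.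
  have p0 : 0 <= p.
    rewrite -(pmulr_lge0 _ dp); apply: le_trans hwd lo.
  have p3 : p <= 3.
    have : p * (2^-1 - dl) >= 0 by rewrite mulr_ge0 // subr_ge0.
    move=> hh; nra.
  have e1' : p * dl <= 3 * dl by rewrite ler_wpM2r.
  have e2' : w * dl <= 1 * dl by rewrite ler_wpM2r.
  rewrite ler_norml; apply/andP; split; nra.
move=> gamma /andP[g0 g1].
set t := Num.min ((1 - gamma) / 4) (2^-1).
have t0 : 0 < t by rewrite lt_min divr_gt0 //=; lra.
have tle : t <= 2^-1 by rewrite /t ge_min lexx orbT.
  have tle' : t <= (1 - gamma) / 4 by rewrite /t ge_min lexx.
  have [eps0 eps00 Hk] := key t t0 tle.
exists eps0 => // eps ei el x A mA.
have [p [ep [dl dl0 bd]]] := Hk eps ei el x A mA.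
rewrite ep (@Wfin _ _ _ W A mA) -EFinM lee_fin.
have [w0 w1] := andP (@Wle1 _ _ _ W A mA).
move: bd; set w := fine (W A) => /andP[lo hi].
  move: w0 w1; rewrite -/w => w0 w1.
have [dl00 dlt] := andP dl0.
have dle : dl <= (1 - gamma) / 4 by apply: le_trans dlt tle'.
have dp : 0 < 1 + dl by lra.
rewrite ler_pdivrMr // in lo.
have hA : gamma * (1 + dl) <= 1 - dl by nra.
have hB : gamma * w * (1 + dl) <= w * (1 - dl) by nra.
rewrite -(ler_pM2r dp); lra.
Qed.
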